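(* For the iterates of SONATA with step-size $\alpha\in(0,1]$ under Assumptions (A), (B), (C), (W), for every agent $i$ and every $\nu\ge0$: $$U(x_i^{\nu+1/2})\le U(x_i^\nu)-\alpha\Big(\big(1-\tfrac\alpha2\big)\tilde\mu_i+\tfrac\alpha2D_i^\ell\Big)\|d_i^\nu\|^2+\alpha\|d_i^\nu\|\,\|\delta_i^\nu\|.$$
   Context: Problem (P): minimize $U=F+G$ over $\mathcal K$, $F=\frac1m\sum_{i=1}^mf_i$. (A): $\mathcal K\subseteq\mathbb R^d$ nonempty closed convex; $f_i$ twice differentiable convex on open $\mathcal O\supseteq\mathcal K$; $\mu I\preceq\nabla^2F\preceq LI$ on $\mathcal K$ ($\mu>0$, $L<\infty$); $G$ convex on $\mathcal K$. (B): connected undirected graph on $\{1,\dots,m\}$, edges $\mathcal E$. (W): $w_{ii}>0$; for $i\ne j$, $w_{ij}>0$ iff $(i,j)\in\mathcal E$, else 0; $W$ doubly stochastic. (C): $\tilde f_i:\mathcal O\times\mathcal O\to\mathbb R$ $C^2$, $\nabla\tilde f_i(x;x)=\nabla f_i(x)$, $\nabla\tilde f_i(\cdot;x)$ $\tilde L_i$-Lipschitz, $\tilde f_i(\cdot;x)$ $\tilde\mu_i$-strongly convex on $\mathcal K$ for all $x\in\mathcal K$ (first-argument derivatives); constants $D_i^\ell\le D_i^u$ with $D_i^\ell I\preceq\nabla^2\tilde f_i(x;y)-\nabla^2F(x)\preceq D_i^uI$ on $\mathcal K\times\mathcal K$. SONATA: $x_i^0\in\mathcal K$, $y_i^0=\nabla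 f_i(x_i^0)$; $\hat x_i^\nu=\arg\min_{x_i\in\mathcal K}\tilde f_i(x_i;x_i^\nu)+(y_i^\nu-\nabla f_i(x_i^\nu))^\top(x_i-x_i^\nu)+G(x_i)$; $d_i^\nu=\hat x_i^\nu-x_i^\nu$; $x_i^{\nu+1/2}=x_i^\nu+\alpha d_i^\nu$; $x_i^{\nu+1}=\sum_jw_{ij}x_j^{\nu+1/2}$; $y_i^{\nu+1}=\sum_jw_{ij}(y_j^\nu+\nabla f_j(x_j^{\nu+1})-\nabla f_j(x_j^\nu))$. Tracking error $\delta_i^\nu=\nabla F(x_i^\nu)-y_i^\nu$. *)

(* Defs.v *)
From HB Require Import structures.
From mathcomp Require Import all_boot all_order all_algebra.
From mathcomp Require Import all_classical all_reals all_analysis.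
Set Implicit Arguments. Unset Strict Implicit. Unset Printing Implicit Defensive.
Import Order.TTheory GRing.Theory Num.Theory.
Import numFieldNormedType.Exports.
Local Open Scope classical_set_scope.
Local Open Scope ring_scope.

Section SonataDefs.
Variable R : realType.
Variable d : nat.
Local Notation vec := 'rV[R]_d.

Definition dotp (u v : vec) : R := (u *m v^T) 0 0.
Definition enorm (u : vec) : R := Num.sqrt (dotp u u).

Definition ebasis (j : 'I_d) : vec := delta_mx 0 j.

Definition partial (f : vec -> R) (j : 'I_d) : vec -> R :=
  fun x => derive f x (ebasis j).
Definition grad (f : vec -> R) (x : vec) : vec := \row_j partial f j x.
Definition hess (f : vec -> R) (x : vec) : 'M[R]_d :=
  \matrix_(j, k) partial (partial f k) j x.

Definition quadf (M : 'M[R]_d) (v : vec) : R := (v *m M *m v^T) 0 0.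
Definition loewner_le (A B : 'M[R]_d) : Prop := forall v : vec, 0 <= quadf (B - A) v.

Definition twice_diff_on (S : set vec) (f : vec -> R) : Prop :=
  forall x, S x -> differentiable f x /\ forall j, differentiable (partial f j) x.

Definition cvx_set (S : set vec) : Prop :=
  forall x y (t : R), S x -> S y -> 0 <= t <= 1 -> S (t *: x + (1 - t) *: y).

Definition convex_fun_on (S : set vec) (f : vec -> R) : Prop :=
  forall x y (t : R), S x -> S y -> 0 <= t <= 1 -> S (t *: x + (1 - t) *: y) ->
    f (t *: x + (1 - t) *: y) <= t * f x + (1 - t) * f y.

Definition strongly_convex_on (S : set vec) (mu : R) (f : vec -> R) : Prop :=
  forall x y (t : R), S x -> S y -> 0 <= t <= 1 ->
    f (t *: x + (1 - t) *: y) <=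
      t * f x + (1 - t) * f y - mu / 2 * t * (1 - t) * (enorm (x - y)) ^+ 2.

Definition lipschitz_grad_on (S : set vec) (L : R) (f : vec -> R) : Prop :=
  forall x y, S x -> S y -> enorm (grad f x - grad f y) <= L * enorm (x - y).

Definition C2_on (P : set (vec * vec)) (g : vec * vec -> R) : Prop :=
  (forall p, P p -> differentiable g p /\
      forall v : vec * vec, differentiable (fun q => derive g q v) p) /\
  (forall v w : vec * vec,
      {in P, continuous (fun q => derive (fun r => derive g r v) q w)}).

End SonataDefs.

(* Main.v *)
Require Import Defs.
From HB Require Import structures.
From mathcomp Require Import all_boot all_order all_algebra.
From mathcomp Require Import all_classical all_reals all_analysis.
From mathcomp Require Import ring lra.
Import Order.TTheory GRing.Theory Num.Theory.
Import numFieldNormedType.Exports.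
Local Open Scope classical_set_scope.
Local Open Scope ring_scope.
Section Line.
Context {R : realType} {V : normedModType R}.
Lemma line_quot (phi : V -> R) (a dv : V) (t : R) :
  (fun h : R => h^-1 *: (((fun s : R => phi (a + s *: dv)) \o shift t) (h *: 1) - phi (a + t *: dv)))
  = (fun h => h^-1 *: ((phi \o shift (a + t *: dv)) (h *: dv) - phi (a + t *: dv))).
Proof.
apply/funext => h /=; congr (_ *: (phi _ - _)).
by rewrite /shift /= scalerDl [h *: 1]mulr1 addrCA addrC.
Qed.
Lemma line_derivable (phi : V -> R) (a dv : V) (t : R) :
  derivable (fun s : R => phi (a + s *: dv)) t 1 <-> derivable phi (a + t *: dv) dv.
Proof. by rewrite /derivable line_quot. Qed.
Lemma line_derive (phi : V -> R) (a dv : V) (t : R) :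
  derive (fun s : R => phi (a + s *: dv)) t 1 = derive phi (a + t *: dv) dv.
Proof. by rewrite /derive line_quot. Qed.
End Line.
Section Mat.
Context {R : realType} {n : nat}.
Local Notation vec := 'rV[R]_n.

Lemma dsum (phi : vec -> R) z v : differentiable phi z ->
  derive phi z v = \sum_j v 0 j * derive phi z (ebasis R j).
Proof.
move=> dp; rewrite deriveE //.
rewrite {1}(row_sum_delta v) linear_sum; apply: eq_bigr => j _.
by rewrite linearZ /= deriveE.
Qed.

Lemma derive_grad (phi : vec -> R) z v : differentiable phi z ->
  derive phi z v = dotp (grad phi z) v.
Proof.
move=> dp; rewrite dsum // /dotp mxE; apply: eq_bigr => j _.
by rewrite !mxE mulrC.
Qed.

Lemma quadfE (M : 'M[R]_n) v :
  quadf M v = \sum_k v 0 k * \sum_j v 0 j * M j k.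
Proof.
rewrite /quadf mxE; apply: eq_bigr => k _.
by rewrite !mxE mulrC.
Qed.

Lemma hess_is_derive (O : set vec) (phi : vec -> R) z v :
  open O -> twice_diff_on O phi -> O z ->
  is_derive z v (fun u => derive phi u v) (quadf (hess phi z) v).
Proof.
move=> oO td Oz.
pose S := \sum_(k < n) (v 0 k \*: partial phi k).
have SE u : O u -> S u = derive phi u v.
  move=> Ou; rewrite dsum; last by case: (td u Ou).
  by rewrite /S fct_sumE; apply: eq_bigr => k _.
apply: (@near_eq_is_derive _ _ _ S).
  have : \forall u \near z, O u by apply: open_nbhs_nbhs.
  by apply: filterS => u /SE.
have dk k : derivable (partial phi k) z v.
  by apply: diff_derivable; case: (td z Oz) => _ /(_ k).
apply: DeriveDef.
  by apply: derivable_sum => k; apply: derivableZ.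
rewrite derive_sum; last by move=> k; apply: derivableZ.
rewrite quadfE; apply: eq_bigr => k _.
rewrite deriveZ // dsum; last by case: (td z Oz) => _ /(_ k).
congr (_ * _); apply: eq_bigr => j _.
by rewrite /hess mxE.
Qed.
End Mat.
Section Pair.
Context {R : realType} {n : nat}.
Local Notation vec := 'rV[R]_n.

Lemma derive_slice (g : vec * vec -> R) w u e :
  derive (fun v => g (v, w)) u e = derive g (u, w) (e, 0).
Proof.
have E : (fun h : R => h^-1 *: (((fun v => g (v, w)) \o shift u) (h *: e) - g (u, w)))
  = (fun h : R => h^-1 *: ((g \o shift (u, w)) (h *: (e, 0)) - g (u, w))).
  apply/funext => h /=; rewrite /shift /=.
  congr (_ *: (g _ - _)).
  have -> : h *: ((e, 0) : vec * vec) = (h *: e, h *: 0) by [].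
  have -> : ((h *: e, h *: 0) : vec * vec) + (u, w) = (h *: e + u, h *: 0 + w) by [].
  by rewrite scaler0 add0r.
by rewrite /derive E.
Qed.

Lemma diff_slice (g : vec * vec -> R) w u :
  differentiable g (u, w) -> differentiable (fun v => g (v, w)) u.
Proof.
move=> dg.
have -> : (fun v => g (v, w)) = g \o (fun v => (v, w)) by [].
apply: differentiable_comp => //.
Qed.

Lemma twice_slice (O : set vec) (g : vec * vec -> R) w :
  C2_on (O `*` O) g -> O w -> twice_diff_on O (fun v => g (v, w)).
Proof.
move=> [C1 _] Ow u Ou; have [dg ddg] := C1 (u, w) (conj Ou Ow).
split; first exact: diff_slice.
move=> j.
have -> : partial (fun v => g (v, w)) j = (fun v => derive g (v, w) (ebasis R j, 0)).
  by apply/funext => v; rewrite /partial derive_slice.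
exact: (@diff_slice (fun q => derive g q (ebasis R j, 0))).
Qed.
End Pair.
Section FSum.
Context {R : realType} {n m : nat}.
Local Notation vec := 'rV[R]_n.
Variable (f : 'I_m -> vec -> R).
Let F := fun z : vec => (m%:R)^-1 * \sum_(i < m) f i z.

Lemma FE : F = (m%:R)^-1 \*: \sum_(i < m) f i.
Proof. by apply/funext => z; rewrite /F /= fct_sumE. Qed.

Lemma F_diff z : (forall i, differentiable (f i) z) -> differentiable F z.
Proof.
move=> df; rewrite FE; apply: differentiableZ; exact: differentiable_sum.
Qed.

Lemma F_derive z v : (forall i, derivable (f i) z v) ->
  derive F z v = (m%:R)^-1 * \sum_i derive (f i) z v.
Proof.
move=> df; rewrite FE deriveZ; last exact: derivable_sum.
by rewrite derive_sum.
Qed.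

Lemma F_derivable z v : (forall i, derivable (f i) z v) -> derivable F z v.
Proof. move=> df; rewrite FE; apply: derivableZ; exact: derivable_sum. Qed.

Lemma F_hess_is_derive (O : set vec) z v :
  open O -> (forall i, twice_diff_on O (f i)) -> O z ->
  is_derive z v (fun u => derive F u v) (quadf (hess F z) v).
Proof.
move=> oO td Oz.
have nO : \forall u \near z, O u by apply: open_nbhs_nbhs.
pose S := (m%:R)^-1 \*: \sum_(i < m) (fun u => derive (f i) u v).
have SE : \forall u \near z, S u = derive F u v.
  apply: filterS nO => u Ou; rewrite F_derive; last first.
    by move=> i; apply: diff_derivable; case: (td i u Ou).
  by rewrite /S /= fct_sumE.
apply: (near_eq_is_derive SE).
have hi i := hess_is_derive O (f i) z v oO (td i) Oz.
apply: DeriveDef.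
  apply: derivableZ; apply: derivable_sum => i; by case: (hi i).
rewrite deriveZ; last by apply: derivable_sum => i; by case: (hi i).
rewrite derive_sum; last by move=> i; by case: (hi i).
have hi2 i : derive (fun u => derive (f i) u v) z v = quadf (hess (f i) z) v.
  by case: (hi i).
under eq_bigr do rewrite hi2.
have HF : hess F z = (m%:R)^-1 *: \sum_i hess (f i) z.
  apply/matrixP => j k; rewrite /hess !mxE summxE.
  rewrite /partial.
  have PE : \forall u \near z, ((m%:R)^-1 \*: \sum_(i < m) (fun u => derive (f i) u (ebasis R k))) u
       = derive F u (ebasis R k).
    apply: filterS nO => u Ou; rewrite F_derive; last first.
      by move=> i; apply: diff_derivable; case: (td i u Ou).
    by rewrite /= fct_sumE.
  rewrite -(near_eq_derive _ PE) deriveZ; last first.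
    apply: derivable_sum => i; apply: diff_derivable.
    by case: (td i z Oz) => _ /(_ k).
  rewrite derive_sum; last first.
    move=> i; apply: diff_derivable.
    by case: (td i z Oz) => _ /(_ k).
  congr (_ * _); apply: eq_bigr => i _; rewrite !mxE.
  done.
rewrite HF /quadf -scalemxAr -scalemxAl mxE; congr (_ * _).
by rewrite mulmx_sumr mulmx_suml summxE.
Qed.
End FSum.
Section Taylor.
Context {R : realType}.
Lemma taylor2 (g g1 g2 : R -> R) (c a : R) : 0 <= a <= 1 ->
  (forall t : R, 0 <= t <= 1 -> is_derive t 1 g (g1 t)) ->
  (forall t : R, 0 <= t <= 1 -> is_derive t 1 g1 (g2 t)) ->
  (forall t : R, 0 <= t <= 1 -> c <= g2 t) ->
  g 0 + a * g1 0 + c * a ^+ 2 / 2 <= g a.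
Proof.
move=> /andP[a0 a1] hg hg1 hc.
pose psi := g1 - c \*: (@id R).
have dpsi (t : R) : 0 <= t <= 1 -> is_derive t 1 psi (g2 t - c *: 1).
  move=> ht; have := hg1 t ht => H.
  apply: is_deriveB; apply: is_deriveZ; exact: is_derive_id.
have itv01 (t : R) : t \in `[0, 1]%R -> 0 <= t <= 1 by rewrite in_itv.
have itvo (t : R) : t \in `]0, 1[%R -> 0 <= t <= 1.
  by rewrite in_itv /= => /andP[h1 h2]; rewrite !ltW.
have psi_incr x y : 0 <= x -> x <= y -> y <= 1 -> psi x <= psi y.
  apply: ger0_derive1_ndecr.
  - by move=> t /itvo ht; case: (dpsi t ht).
  - move=> t /itvo ht; rewrite derive1E; case: (dpsi t ht) => _ ->.
    by rewrite subr_ge0 [c *: 1]mulr1 hc.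
  - apply: derivable_within_continuous => t /itv01 ht; by case: (dpsi t ht).
pose chi := g - (g1 0) \*: (@id R) - (c / 2) \*: ((@id R) * (@id R)).
have dchi (t : R) : 0 <= t <= 1 -> is_derive t 1 chi (g1 t - g1 0 *: 1 - (c / 2) *: (t *: 1 + t *: 1)).
  move=> ht; have := hg t ht => H.
  by apply: is_deriveB.
have : chi 0 <= chi a.
  apply: (ger0_derive1_ndecr (a := 0) (b := 1)) => //.
  - by move=> t /itvo ht; case: (dchi t ht).
  - move=> t /itvo ht; rewrite derive1E; case: (dchi t ht) => _ ->.
    have := psi_incr 0 t (lexx 0) (proj1 (andP ht)) (proj2 (andP ht)).
    rewrite /psi /= => h; move: h; rewrite !fctE /= !scaler1 /= => h.
    have E1 (u w : R) : u *: w = u * w by [].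
    rewrite !E1 in h *; lra.
  - apply: derivable_within_continuous => t /itv01 ht; by case: (dchi t ht).
rewrite /chi /= !fctE /=.
have E1 (u w : R) : u *: w = u * w by [].
rewrite !E1 => h.
rewrite expr2; move: h; rewrite !mulr0 !subr0; nra.
Qed.
End Taylor.
Section Dot.
Context {R : realType} {n : nat}.
Local Notation vec := 'rV[R]_n.
Implicit Types u v w : vec.

Lemma dotpE u v : dotp u v = \sum_j u 0 j * v 0 j.
Proof. by rewrite /dotp mxE; apply: eq_bigr => j _; rewrite mxE. Qed.

Lemma dotpC u v : dotp u v = dotp v u.
Proof. by rewrite !dotpE; apply: eq_bigr => j _; rewrite mulrC. Qed.

Lemma dotpDl u v w : dotp (u + v) w = dotp u w + dotp v w.
Proof. by rewrite !dotpE -big_split; apply: eq_bigr => j _; rewrite mxE mulrDl. Qed.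

Lemma dotpNl u w : dotp (- u) w = - dotp u w.
Proof. by rewrite !dotpE -sumrN; apply: eq_bigr => j _; rewrite mxE mulNr. Qed.

Lemma dotpBl u v w : dotp (u - v) w = dotp u w - dotp v w.
Proof. by rewrite dotpDl dotpNl. Qed.

Lemma dotpZl (k : R) u w : dotp (k *: u) w = k * dotp u w.
Proof. by rewrite !dotpE mulr_sumr; apply: eq_bigr => j _; rewrite mxE mulrA. Qed.

Lemma dotpDr u v w : dotp w (u + v) = dotp w u + dotp w v.
Proof. by rewrite dotpC dotpDl !(dotpC w). Qed.
Lemma dotpBr u v w : dotp w (u - v) = dotp w u - dotp w v.
Proof. by rewrite dotpC dotpBl !(dotpC w). Qed.
Lemma dotpZr (k : R) u w : dotp w (k *: u) = k * dotp w u.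
Proof. by rewrite dotpC dotpZl dotpC. Qed.

Lemma dotp_ge0 u : 0 <= dotp u u.
Proof. by rewrite dotpE; apply: sumr_ge0 => j _; rewrite -expr2 sqr_ge0. Qed.

Lemma dotp_eq0 u : dotp u u = 0 -> u = 0.
Proof.
rewrite dotpE => /eqP; rewrite psumr_eq0; last by move=> j _; rewrite -expr2 sqr_ge0.
move=> /allP H; apply/rowP => j; rewrite mxE.
have := H j (mem_index_enum j); rewrite -expr2 sqrf_eq0 => /eqP ->. done.
Qed.

Lemma enorm_sqr u : enorm u ^+ 2 = dotp u u.
Proof. by rewrite /enorm sqr_sqrtr // dotp_ge0. Qed.

Lemma enorm_ge0 u : 0 <= enorm u.
Proof. exact: sqrtr_ge0. Qed.

Lemma enormN u : enorm (- u) = enorm u.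
Proof. by rewrite /enorm dotpNl dotpC dotpNl opprK. Qed.

Lemma dotp0l u : dotp 0 u = 0.
Proof. by rewrite dotpE big1 // => j _; rewrite mxE mul0r. Qed.

Lemma cauchy_schwarz u v : dotp u v <= enorm u * enorm v.
Proof.
set a := enorm u; set b := enorm v.
have a0 : 0 <= a by exact: enorm_ge0.
have b0 : 0 <= b by exact: enorm_ge0.
have ha : dotp u u = a ^+ 2 by rewrite enorm_sqr.
have hb : dotp v v = b ^+ 2 by rewrite enorm_sqr.
have [a_eq0|a_gt0] := eqVneq a 0.
  have -> : u = 0 by apply: dotp_eq0; rewrite ha a_eq0 expr0n.
  by rewrite dotp0l mulr_ge0.
have [b_eq0|b_gt0] := eqVneq b 0.
  have -> : v = 0 by apply: dotp_eq0; rewrite hb b_eq0 expr0n.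
  by rewrite dotpC dotp0l mulr_ge0.
have := dotp_ge0 (b *: u - a *: v).
rewrite dotpBl !dotpBr !dotpZl !dotpZr ha hb (dotpC v u) => h.
have ab : 0 < a * b by rewrite mulr_gt0 // lt_def ?a_gt0 ?b_gt0.
nra.
Qed.
End Dot.
Section Cvx.
Context {R : realType} {n : nat}.
Local Notation vec := 'rV[R]_n.

Lemma cvx_comb (K : set vec) : cvx_set K -> forall k (w : 'I_k -> R) (p : 'I_k -> vec),
  (forall j, 0 <= w j) -> \sum_j w j = 1 -> (forall j, K (p j)) ->
  K (\sum_j w j *: p j).
Proof.
move=> cK; elim=> [|k IH] w p w0 w1 pK.
  by move: w1; rewrite big_ord0 => /eqP; rewrite eq_sym oner_eq0.
rewrite big_ord_recr /=; rewrite big_ord_recr /= in w1.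
set s := \sum_(j < k) w (widen_ord (leqnSn k) j) in w1.
have s0 : 0 <= s by apply: sumr_ge0 => j _.
have [s_eq0|s_gt0] := eqVneq s 0.
  have wj0 j : w (widen_ord (leqnSn k) j) = 0.
    move/eqP: s_eq0; rewrite psumr_eq0; last by move=> *; exact: w0.
    by move=> /allP /(_ j (mem_index_enum j)) /eqP.
  rewrite big1; last by move=> j _; rewrite wj0 scale0r.
  have -> : w ord_max = 1 by rewrite -w1 s_eq0 add0r.
  by rewrite add0r scale1r.
have sp : 0 < s by rewrite lt_def s_gt0 s0.
have -> : \sum_(j < k) w (widen_ord (leqnSn k) j) *: p (widen_ord (leqnSn k) j)
   = s *: \sum_(j < k) (w (widen_ord (leqnSn k) j) / s) *: p (widen_ord (leqnSn k) j).
  rewrite scaler_sumr; apply: eq_bigr => j _; rewrite scalerA.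
  by rewrite mulrCA mulfV // mulr1.
have -> : w ord_max = 1 - s by rewrite -w1 addrAC subrr add0r.
apply: cK.
- apply: IH => //.
  + by move=> j; apply: divr_ge0.
  + by rewrite -mulr_suml mulfV.
- exact: pK.
- by rewrite s0 /= -w1 lerDl.
Qed.
End Cvx.
Section Quad.
Context {R : realType} {n : nat}.
Lemma quadfB (A B : 'M[R]_n) v : quadf (A - B) v = quadf A v - quadf B v.
Proof. by rewrite /quadf mulmxBr mulmxBl !mxE. Qed.
Lemma quadf_scalar (c : R) (v : 'rV[R]_n) : quadf (c%:M) v = c * dotp v v.
Proof. rewrite /quadf mul_mx_scalar -scalemxAl mxE. done. Qed.
End Quad.
Lemma final_ineq {R : realType} (N alpha Fp Fx Gp G0 Gh fxh fx0 fxp Dy D1 D2 nd ndel mu' dl : R) :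
  fxp <= alpha * fxh + (1 - alpha) * fx0 - mu' / 2 * alpha * (1 - alpha) * N ->
  Gp <= alpha * Gh + (1 - alpha) * G0 ->
  fx0 - Fx + alpha * (D1 - D2) + dl * N * alpha ^+ 2 / 2 <= fxp - Fp ->
  alpha * (fxh + (Dy - D1) + Gh) <= alpha * (fx0 + G0 - mu' / 2 * N) ->
  alpha * (D2 - Dy) <= alpha * (ndel * nd) ->
  Fp + Gp <=
  Fx + G0 - alpha * ((1 - alpha / 2) * mu' + alpha / 2 * dl) * N +
  alpha * nd * ndel.
Proof. move=> h1 h2 h3 h4 h5; lra. Qed.
Theorem lemma3p1
  (R : realType) (d m : nat)
  (* (A): feasible set K, open domain O, local costs f_i, regularizer G *)
  (K O : set 'rV[R]_d) (f : 'I_m -> 'rV[R]_d -> R) (G : 'rV[R]_d -> R)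
  (mu L : R)
  (* (B): graph; (W): weight matrix *)
  (E : rel 'I_m) (W : 'M[R]_m)
  (* (C): surrogates ft i z x = f~_i(z; x) and constants *)
  (ft : 'I_m -> 'rV[R]_d -> 'rV[R]_d -> R)
  (Lt mut Dl Du : 'I_m -> R)
  (* SONATA: step size, iterates *)
  (alpha : R)
  (x xhat y : nat -> 'I_m -> 'rV[R]_d) :
  let F := fun z => (m%:R)^-1 * \sum_(i < m) f i z in
  let U := fun z => F z + G z in
  (* (A) *)
  K !=set0 -> closed K -> cvx_set K ->
  open O -> K `<=` O ->
  (forall i, twice_diff_on O (f i) /\ convex_fun_on O (f i)) ->
  0 < mu -> 
  (forall z, K z -> loewner_le (mu%:M) (hess F z) /\ loewner_le (hess F z) (L%:M)) ->
  convex_fun_on K G ->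
  (* (B) *)
  (forall i j, E i j = E j i) -> (forall i j, connect E i j) ->
  (* (W) *)
  (forall i, 0 < W i i) ->
  (forall i j, i != j -> (0 < W i j <-> E i j) /\ (~~ E i j -> W i j = 0)) ->
  (forall i, \sum_(j < m) W i j = 1) -> (forall j, \sum_(i < m) W i j = 1) ->
  (* (C) *)
  (forall i, C2_on (O `*` O) (fun p => ft i p.1 p.2)) ->
  (forall i z, K z -> grad (fun w => ft i w z) z = grad (f i) z) ->
  (forall i z, K z -> lipschitz_grad_on K (Lt i) (fun w => ft i w z)) ->
  (forall i, 0 < mut i) ->
  (forall i z, K z -> strongly_convex_on K (mut i) (fun w => ft i w z)) ->
  (forall i, Dl i <= Du i) ->
  (forall i z w, K z -> K w ->
     loewner_le ((Dl i)%:M) (hess (fun v => ft i v w) z - hess F z) /\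
     loewner_le (hess (fun v => ft i v w) z - hess F z) ((Du i)%:M)) ->
  (* SONATA *)
  0 < alpha <= 1 ->
  (forall i, K (x 0%N i)) ->
  (forall i, y 0%N i = grad (f i) (x 0%N i)) ->
  (forall nu i, K (xhat nu i) /\
     forall z, K z ->
       ft i (xhat nu i) (x nu i)
         + dotp (y nu i - grad (f i) (x nu i)) (xhat nu i - x nu i) + G (xhat nu i)
       <= ft i z (x nu i) + dotp (y nu i - grad (f i) (x nu i)) (z - x nu i) + G z) ->
  (forall nu i, x nu.+1 i =
     \sum_(j < m) W i j *: (x nu j + alpha *: (xhat nu j - x nu j))) ->
  (forall nu i, y nu.+1 i =
     \sum_(j < m) W i j *: (y nu j + grad (f j) (x nu.+1 j) - grad (f j) (x nu j))) ->
  forall (i : 'I_m) (nu : nat),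
    let dd := xhat nu i - x nu i in
    let delta := grad F (x nu i) - y nu i in
    U (x nu i + alpha *: dd) <=
      U (x nu i)
      - alpha * ((1 - alpha / 2) * mut i + alpha / 2 * Dl i) * (enorm dd) ^+ 2
      + alpha * enorm dd * enorm delta.
Proof.
move=> F U hK0 hKc hKcvx hO hKO hf hmu hFhess hG hE hconn hWii hW hW1 hW2
  hC2 hgrad hlip hmut hsc hDle hD ha hx0 hy0 hopt hx hy i nu.
cbv zeta.
have /andP[a0 a1] := ha.
have Wge0 i' j : 0 <= W i' j.
  have [->|ne] := eqVneq i' j; first exact: ltW.
  have [h1 h2] := hW i' j ne.
  by case: (boolP (E i' j)) => [/h1/ltW|/h2 ->].
have xK : forall k j, K (x k j).
  elim=> [|k IH] j; first exact: hx0.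
  rewrite hx; apply: cvx_comb => //.
  move=> l; have -> : x k l + alpha *: (xhat k l - x k l) = alpha *: xhat k l + (1 - alpha) *: x k l.
    by rewrite scalerBr scalerBl scale1r addrCA.
  apply: hKcvx; [exact: (hopt k l).1 | exact: IH | by rewrite (ltW a0) a1].
set x0 := x nu i. set xh := xhat nu i.
have Kx0 : K x0 by exact: xK.
have [Kxh hmin] := hopt nu i.
set dd := xh - x0.
set N := dotp dd dd.
have eN : enorm dd ^+ 2 = N by rewrite enorm_sqr.
have N0 : 0 <= N by exact: dotp_ge0.
have mu0 := hmut i.
set fx := fun w => ft i w x0.
set r := y nu i - grad (f i) x0.
have stepA : fx xh + dotp r dd + G xh <= fx x0 + G x0 - mut i / 2 * N.
  have key t : 0 < t <= 1 -> fx xh + dotp r dd + G xh <= fx x0 + G x0 - mut i / 2 * (1 - t) * N.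
    move=> /andP[t0 t1].
    have t01 : 0 <= t <= 1 by rewrite (ltW t0) t1.
    set zt := t *: x0 + (1 - t) *: xh.
    have Kzt : K zt by apply: hKcvx.
    have h1 := hmin zt Kzt.
    have h2 := hsc i x0 Kx0 x0 xh t Kx0 Kxh t01.
    have h3 := hG x0 xh t Kx0 Kxh t01 Kzt.
    have h4 : dotp r (zt - x0) = (1 - t) * dotp r dd.
      rewrite -dotpZr; congr dotp; apply/rowP => j; rewrite !mxE; ring.
    have h5 : dotp r (x0 - x0) = 0 by rewrite subrr dotpC dotp0l.
    have h6 : enorm (x0 - xh) ^+ 2 = N by rewrite -opprB enormN eN.
    rewrite h4 in h1.
    rewrite h6 in h2.
    rewrite /fx /=.
    nra.
  apply/ler_addgt0Pr => e e0.
  set C := mut i / 2 * N.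
  have C0 : 0 <= C by rewrite /C mulr_ge0 // divr_ge0 // ltW.
  set t := e / (C + e).
  have Ce : 0 < C + e by rewrite ltr_wpDl.
  have te : t * (C + e) = e by rewrite /t mulfVK // gt_eqF.
  have t0 : 0 < t by rewrite /t divr_gt0.
  have t1 : t <= 1 by rewrite /t ler_pdivrMr // mul1r lerDr.
  have := key t; rewrite t0 t1 => /(_ isT) h.
  have hC : mut i / 2 * (1 - t) * N = C - t * C by rewrite /C; ring.
  rewrite hC in h.
  have : 0 <= t * e by rewrite mulr_ge0 // ltW.
  nra.
have a01 : 0 <= alpha <= 1 by rewrite (ltW a0) a1.
have ha' := a01.
have ep : x0 + alpha *: dd = alpha *: xh + (1 - alpha) *: x0.
  by apply/rowP => j; rewrite !mxE; ring.
have Kp : K (x0 + alpha *: dd) by rewrite ep; apply: hKcvx.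
have stepB := hsc i x0 Kx0 xh x0 alpha Kxh Kx0 a01.
rewrite -ep -/dd eN in stepB.
have stepC := hG xh x0 alpha Kxh Kx0 a01.
rewrite -ep in stepC; have {stepC} stepC := stepC Kp.
have tdfx : twice_diff_on O fx := twice_slice O (fun p => ft i p.1 p.2) x0 (hC2 i) (hKO _ Kx0).
have tdf : forall j, twice_diff_on O (f j) := fun j => (hf j).1.
have Kzt (t : R) : 0 <= t <= 1 -> K (x0 + t *: dd).
  move=> t01; have -> : x0 + t *: dd = t *: xh + (1 - t) *: x0.
    by apply/rowP => j; rewrite !mxE; ring.
  exact: hKcvx.
have Ozt (t : R) : 0 <= t <= 1 -> O (x0 + t *: dd) by move=> /Kzt /hKO.
pose phi := fun v => fx v - F v.
have phiE : phi = fx - F by apply/funext.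
have dphi z : O z -> derivable phi z dd /\ derive phi z dd = derive fx z dd - derive F z dd.
  move=> Oz.
  have d1 : derivable fx z dd by apply: diff_derivable; exact: (tdfx z Oz).1.
  have d2 : derivable F z dd.
    by apply: diff_derivable; apply: F_diff => j; exact: (tdf j z Oz).1.
  rewrite phiE; split; first exact: derivableB.
  by rewrite deriveB.
pose g := fun s : R => phi (x0 + s *: dd).
pose g1 := fun s : R => derive phi (x0 + s *: dd) dd.
pose g2 := fun s : R => quadf (hess fx (x0 + s *: dd)) dd - quadf (hess F (x0 + s *: dd)) dd.
have hg (t : R) : 0 <= t <= 1 -> is_derive t 1 g (g1 t).
  move=> /Ozt Oz; apply: DeriveDef; last by rewrite /g line_derive.
  by apply/line_derivable; case: (dphi _ Oz).
have hg1 (t : R) : 0 <= t <= 1 -> is_derive t 1 g1 (g2 t).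
  move=> /Ozt Oz.
  pose chi := fun u => derive phi u dd.
  have hchi : is_derive (x0 + t *: dd) dd chi (g2 t).
    have nO : \forall u \near (x0 + t *: dd), O u by apply: open_nbhs_nbhs.
    apply: (@near_eq_is_derive _ _ _ ((fun u => derive fx u dd) - (fun u => derive F u dd))).
      by apply: filterS nO => u Ou; case: (dphi u Ou) => _ Eu; rewrite /chi Eu.
    have H1 := hess_is_derive O fx (x0 + t *: dd) dd hO tdfx Oz.
    have H2 := F_hess_is_derive f O (x0 + t *: dd) dd hO tdf Oz.
    have H3 := @is_deriveB _ _ _ _ _ _ _ _ _ H1 H2.
    rewrite /g2 /F. exact H3.
  apply: DeriveDef.
    by apply/(line_derivable chi); case: hchi.
  by rewrite (line_derive chi); case: hchi.
have hc (t : R) : 0 <= t <= 1 -> Dl i * N <= g2 t.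
  move=> t01; have [h _] := hD i _ x0 (Kzt t t01) Kx0.
  have := h dd; rewrite !quadfB quadf_scalar /g2 -/N => h'. rewrite -subr_ge0; exact h'.
have stepD := taylor2 g g1 g2 (Dl i * N) alpha ha' hg hg1 hc.
rewrite /g /g1 !scale0r !addr0 in stepD.
have [_ D0] := dphi x0 (hKO _ Kx0).
rewrite D0 in stepD.
have dfx0 : differentiable fx x0 by exact: (tdfx x0 (hKO _ Kx0)).1.
have dF0 : differentiable F x0.
  by apply: F_diff => j; exact: (tdf j x0 (hKO _ Kx0)).1.
rewrite (derive_grad _ _ dd dfx0) (derive_grad _ _ dd dF0) in stepD.
rewrite /fx hgrad // -/fx in stepD.
have CS := cauchy_schwarz (grad F x0 - y nu i) dd.
rewrite dotpBl in CS.
have rE : dotp r dd = dotp (y nu i) dd - dotp (grad (f i) x0) dd by rewrite dotpBl.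
rewrite rE in stepA.
rewrite /phi in stepD.
rewrite /U eN.
have nd0 := enorm_ge0 dd.
have ndl0 := enorm_ge0 (grad F x0 - y nu i).
have sA := ler_wpM2l (ltW a0) stepA.
have sCS := ler_wpM2l (ltW a0) CS.
move: stepB stepC stepD sA sCS nd0 ndl0.
rewrite /fx /=.
move: (F (x0 + alpha *: dd)) (F x0) (G (x0 + alpha *: dd)) (G x0) (G xh)
  (ft i xh x0) (ft i x0 x0) (ft i (x0 + alpha *: dd) x0) (dotp (y nu i) dd)
  (dotp (grad (f i) x0) dd) (dotp (grad F x0) dd) (enorm dd)
  (enorm (grad F x0 - y nu i)) => Fp Fx Gp G0 Gh fxh fx0 fxp Dy D1 D2 nd ndel.
move: (mut i) (Dl i) mu0 => mu' dl mu0'.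
move=> h1 h2 h3 h4 h5 _ _; exact: (@final_ineq _ _ _ _ _ _ _ _ _ _ _ _ _ _ _ _ _ _ h1 h2 h3 h4 h5).
Qed.
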